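(* Let $n\ge 1$, let $c\in\mathbb{R}^n$ with $c_1\ge c_2\ge\cdots\ge c_n\ge 0$, and let $u\in\mathbb{R}^n$ with $u_i>0$ for all $i$. Let $f(x)=\frac12\left(\sum_{i=1}^n x_i\right)^2-\sum_{i=1}^n c_ix_i$. For $k=0,\dots,n$ let $U_k=\sum_{i=1}^k u_i$ ($U_0=0$) and let $x^{(k)}$ be the vector with $x^{(k)}_i=u_i$ for $i\le k$ and $x^{(k)}_i=0$ for $i>k$. For $k=1,\dots,n$ let $G_k=U_{k-1}+\frac12u_k-c_k$, and suppose $\bar n$ is the smallest index in $\{1,\dots,n\}$ with $G_{\bar n}\ge 0$ and that $\bar n>1$. Let $\delta_1=\min\{c_{\bar n-1}-U_{\bar n-2},\,u_{\bar n-1}\}$, $\delta_2=\max\{c_{\bar n}-U_{\bar n-1},\,0\}$, $\bar x=x^{(\bar n-2)}+\delta_1e_{\bar n-1}$ and $\tilde x=x^{(\bar n-1)}+\delta_2e_{\bar n}$, where $e_i$ is the $i$-th standard unit vector. Then: (i) if $\delta_1=u_{\bar n-1}$, then $\min\{f(\bar x),f(\tilde x)\}=f(\tilde x)$; (ii) if $\delta_2=0$, then $\min\{f(\bar x),f(\tilde x)\}=f(\bar x)$. *)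

(* Defs.v *)
From mathcomp Require Import all_boot all_order all_algebra.
Set Implicit Arguments. Unset Strict Implicit. Unset Printing Implicit Defensive.
Import Order.TTheory GRing.Theory Num.Theory.
Local Open Scope ring_scope.

(* Vectors in R^n are represented as functions nat -> R, using only the
   coordinates 1..n (1-based, as in the paper). *)

Section Defs.
Variable R : realFieldType.

Definition fobj (n : nat) (c x : nat -> R) : R :=
  2^-1 * (\sum_(1 <= i < n.+1) x i) ^+ 2 - \sum_(1 <= i < n.+1) c i * x i.

Definition Usum (u : nat -> R) (k : nat) : R := \sum_(1 <= i < k.+1) u i.

Definition xk (u : nat -> R) (k : nat) : nat -> R :=
  fun i => if (i <= k)%N then u i else 0.

Definition evec (j : nat) : nat -> R := fun i => if i == j then 1 else 0.

Definition Gk (u c : nat -> R) (k : nat) : R := Usum u k.-1 + 2^-1 * u k - c k.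
End Defs.

(* Main.v *)
Require Import Defs.
From mathcomp Require Import all_boot all_order all_algebra.
From mathcomp Require Import ring lra.
Import Order.TTheory GRing.Theory Num.Theory.
Local Open Scope ring_scope.

Lemma sum_trunc (R : realFieldType) (n k : nat) (F : nat -> R) :
  (k <= n)%N -> (forall i, (k < i)%N -> F i = 0) ->
  \sum_(1 <= i < n.+1) F i = \sum_(1 <= i < k.+1) F i.
Proof.
move=> kn H; rewrite (big_cat_nat _ (n:=k.+1)) //= ?ltnS //.
rewrite [X in _ + X]big1_seq ?addr0 // => i /andP [_].
by rewrite mem_index_iota => /andP [hi _]; exact: H.
Qed.

Lemma sum_single (R : realFieldType) (n j : nat) (F : nat -> R) :
  (1 <= j <= n)%N -> (forall i, i != j -> F i = 0) ->
  \sum_(1 <= i < n.+1) F i = F j.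
Proof.
move=> /andP [j1 jn] H; rewrite (big_cat_nat _ (n:=j)) //= ?ltnS ?(leqW jn) //.
rewrite [X in _ + X]big_ltn ?ltnS //.
rewrite [X in X + _]big1_seq ?add0r; last first.
  by move=> i /andP [_]; rewrite mem_index_iota => /andP [_ hi]; apply: H; rewrite ltn_eqF.
rewrite [X in _ + X]big1_seq ?addr0 // => i /andP [_].
by rewrite mem_index_iota => /andP [hi _]; apply: H; rewrite gtn_eqF.
Qed.

Theorem corollary3 (R : realFieldType) (n : nat) (c u : nat -> R) (nb : nat) :
  (1 <= n)%N ->
  (forall i, (1 <= i)%N -> (i < n)%N -> c (i.+1) <= c i) ->
  0 <= c n ->
  (forall i, (1 <= i <= n)%N -> 0 < u i) ->
  (1 <= nb <= n)%N ->
  0 <= Gk u c nb ->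
  (forall k, (1 <= k < nb)%N -> Gk u c k < 0) ->
  (1 < nb)%N ->
  let delta1 := Num.min (c nb.-1 - Usum u nb.-2) (u nb.-1) in
  let delta2 := Num.max (c nb - Usum u nb.-1) 0 in
  let xbar := fun i => xk u nb.-2 i + delta1 * evec R nb.-1 i in
  let xtil := fun i => xk u nb.-1 i + delta2 * evec R nb i in
  (delta1 = u nb.-1 ->
     Num.min (fobj n c xbar) (fobj n c xtil) = fobj n c xtil) /\
  (delta2 = 0 ->
     Num.min (fobj n c xbar) (fobj n c xtil) = fobj n c xbar).
Proof.
move=> n1 _ _ _ /andP [nb1 nbn] _ _ nb2 d1 d2 xbar xtil.
have e1 : nb.-2.+1 = nb.-1 by case: nb nb2 {nbn nb1 d1 d2 xbar xtil} => [|[|m]].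
have e2 : nb.-1.+1 = nb by case: nb nb2 {nbn nb1 d1 d2 xbar xtil e1} => [|[|m]].
have le1 : (nb.-1 <= n)%N by exact: leq_trans (leq_pred nb) nbn.
have le2 : (nb.-2 <= n)%N by exact: leq_trans (leq_pred _) le1.
have gen : forall (k : nat) (g : nat -> R), (k <= n)%N ->
  \sum_(1 <= i < n.+1) g i * xk u k i = \sum_(1 <= i < k.+1) g i * u i.
  move=> k g kn; rewrite (@sum_trunc R n k _ kn); last first.
    by move=> i ki; rewrite /xk leqNgt ki mulr0.
  by rewrite !big_nat; apply: eq_bigr => i /andP [_ hi]; rewrite /xk -ltnS hi.
have gen1 : forall k, (k <= n)%N -> \sum_(1 <= i < n.+1) xk u k i = Usum u k.
  move=> k kn; have := gen k (fun _ => 1) kn.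
  move=> H; transitivity (\sum_(1 <= i < n.+1) (fun=> (1:R)) i * xk u k i).
    by apply: eq_bigr => i _; rewrite mul1r.
  by rewrite H; apply: eq_bigr => i _; rewrite mul1r.
have ev : forall (j : nat) (g : nat -> R) a, (1 <= j <= n)%N ->
  \sum_(1 <= i < n.+1) g i * (a * evec R j i) = g j * a.
  move=> j g a hj; rewrite (@sum_single R n j _ hj); first by rewrite /evec eqxx mulr1.
  by move=> i /negbTE hi; rewrite /evec hi !mulr0.
have j1 : (1 <= nb.-1 <= n)%N by rewrite le1 -ltnS e2 nb2.
have j2 : (1 <= nb <= n)%N by rewrite nb1 nbn.
set S := Usum u nb.-2.
set C := \sum_(1 <= i < nb.-2.+1) c i * u i.
have US : Usum u nb.-1 = S + u nb.-1 by rewrite /S /Usum -e1 big_nat_recr //.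
have CS : \sum_(1 <= i < nb.-1.+1) c i * u i = C + c nb.-1 * u nb.-1
  by rewrite /C -e1 big_nat_recr.
have fb : fobj n c xbar = 2^-1 * (S + d1) ^+ 2 - (C + c nb.-1 * d1).
  rewrite /fobj /xbar big_split /= gen1 //.
  have -> : \sum_(1 <= i < n.+1) d1 * evec R nb.-1 i = 1 * d1.
    by rewrite -(ev _ (fun _ => 1) d1 j1); apply: eq_bigr => i _; rewrite mul1r.
  rewrite mul1r; congr (_ - _).
  by rewrite (eq_bigr (fun i => c i * xk u nb.-2 i + c i * (d1 * evec R nb.-1 i)))
    ?big_split /= ?gen ?ev // => i _; rewrite mulrDr.
have ft : fobj n c xtil = 2^-1 * (S + u nb.-1 + d2) ^+ 2
    - (C + c nb.-1 * u nb.-1 + c nb * d2).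
  rewrite /fobj /xtil big_split /= gen1 // US.
  have -> : \sum_(1 <= i < n.+1) d2 * evec R nb i = 1 * d2.
    by rewrite -(ev _ (fun _ => 1) d2 j2); apply: eq_bigr => i _; rewrite mul1r.
  rewrite mul1r; congr (_ - _).
  by rewrite (eq_bigr (fun i => c i * xk u nb.-1 i + c i * (d2 * evec R nb i)))
    ?big_split /= ?gen ?ev ?CS // => i _; rewrite mulrDr.
rewrite fb ft; split.
- move=> hd1; rewrite hd1; apply: min_r.
  rewrite /d2 US; case: (leP (c nb - (S + u nb.-1)) 0) => h.
  + lra.
  + set q := c nb.
    have -> : S + u nb.-1 + (q - (S + u nb.-1)) = q by ring.
    have := sqr_ge0 (q - (S + u nb.-1)); nra.
- move=> hd2; rewrite hd2; apply: min_l.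
  move: hd2; rewrite /d2 US => hd2.
  have hq : c nb - (S + u nb.-1) <= 0 by rewrite -hd2 le_max lexx ?orbT.
  rewrite /d1; case: (leP (c nb.-1 - S) (u nb.-1)) => h.
  + set p := c nb.-1.
    have -> : S + (p - S) = p by ring.
    have := sqr_ge0 (p - (S + u nb.-1)); nra.
  + lra.
Qed.
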